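(* Let $\mathbb{F}_q$ have characteristic at least $23$, let $k/\mathbb{F}_q$ be a field, and let $v=\sum_{a\in\Phi_V}v_a\in V_k$. Suppose that $v_a=0$ for all $a\in S$ and $v_a\neq0$ for all $a\in\lambda(S)$, where $S$ is one of the following four sets of weights: $\{\tfrac12(a_1+a_2+a_3+a_4),\tfrac12(a_1-a_2+a_3+a_4),\tfrac12(a_1+a_2-a_3+a_4),\tfrac12(a_1+a_2+a_3-a_4)\}$, $\{\tfrac12(a_1+a_2+a_3+a_4),\tfrac12(-a_1+a_2+a_3+a_4),\tfrac12(a_1-a_2+a_3+a_4),\tfrac12(a_1+a_2+a_3-a_4)\}$, $\{\tfrac12(a_1+a_2+a_3+a_4),\tfrac12(-a_1+a_2+a_3+a_4),\tfrac12(a_1+a_2-a_3+a_4),\tfrac12(a_1+a_2+a_3-a_4)\}$, $\{\tfrac12(a_1+a_2+a_3+a_4),\tfrac12(-a_1+a_2+a_3+a_4),\tfrac12(a_1-a_2+a_3+a_4),\tfrac12(a_1+a_2-a_3+a_4)\}$. Then if $\Delta(v)\neq0$, $v$ belongs to a trivial orbit of $G(k)$.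
   Context: $J$ the $4\times4$ anti-diagonal matrix of $1$'s, $\Psi=\mathrm{diag}(J,J)$, $\mathrm{SO}_8$ the special orthogonal group of the form with Gram matrix $\Psi$, $H=\mathrm{SO}_8/\mu_2$, $\mathfrak{h}=\mathrm{Lie}\,H$, $\theta$ conjugation by $s=\mathrm{diag}(1,-1,-1,1,1,-1,-1,1)$, $G=(H^\theta)^\circ$, $V=\{Y\in\mathfrak{h}:sYs^{-1}=-Y\}$, $B=\mathrm{Spec}\,\mathbb{F}_q[V]^G$, $\pi:V\to B$; $\Delta$ the restriction of the discriminant of $\mathfrak{h}$. $T$ is the image of $\{\mathrm{diag}(a,b,b^{-1},a^{-1},c,d,d^{-1},c^{-1})\}$, and (additively) $a_1=ac,a_2=a/c,a_3=bd,a_4=b/d$, with dual basis $n_1,\dots,n_4$. $\Phi_V$ is the set of the $16$ weights $\frac12(\pm a_1\pm a_2\pm a_3\pm a_4)$ of $T$ on $V$ (each with one-dimensional weight space), $v_a$ the $a$-component of $v$. Partial order on $\Phi_V$: $a\geq b$ iff $n_i(a)\geq n_i(b)$ for all $i$. For $M\subset\Phi_V$, $\lambda(M)$ is the set of maximal elements of $\Phi_V-M$. Kostant section: $E_0\in\mathfrak{h}$ the matrix with entries $(1,2)=1$, $(2,5)=1$, $(3,4)=-1$, $(5,6)=1$, $(5,7)=1$, $(6,8)=-1$, $(7,8)=-1$, $(8,3)=-1$, zeros elsewhere; $\check\rho$ the image of $t\mapsto\mathrm{diag}(t^3,t^2,t^{-2},t^{-3},t,1,1,t^{-1})$; $F_0\in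 V$ unique with $\mathrm{Ad}\check\rho(t)F_0=t^{-1}F_0$, $[E_0,F_0]=d\check\rho(2)$; $\kappa=E_0+\mathfrak{z}_{\mathfrak{h}}(F_0)\subset V$ maps isomorphically to $B$, $\kappa_b$ the point over $b$. $W_0$ is the subgroup of $N_H(T)/T$ generated by $\sigma,\tau$ with $\sigma(a,b,c,d)=(a,b,c^{-1},d^{-1})$, $\tau(a,b,c,d)=(b,a,d,c)$, represented in $N_{H^\theta}(T)$. For $b\in B(k)$ with $\Delta(b)\neq0$, the trivial orbits are the $G(k)$-orbits of the elements $w\kappa_b$, $w\in W_0$ (acting through representatives in $H^\theta$). *)

(* Defs.v *)
From HB Require Import structures.
From mathcomp Require Import all_boot all_order all_algebra.
Set Implicit Arguments. Unset Strict Implicit. Unset Printing Implicit Defensive.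
Import Order.TTheory GRing.Theory Num.Theory.
Local Open Scope ring_scope.

Section Setup.
Variable k : fieldType.

(* 0-indexed coordinates 0..7 of k^8. *)

(* Psi = diag(J,J), J the 4x4 antidiagonal matrix of 1's. *)
Definition Psi : 'M[k]_8 :=
  \matrix_(i, j) (((i < 4)%N == (j < 4)%N) && ((i %% 4 + j %% 4)%N == 3%N))%:R.

(* sign pattern of s = diag(1,-1,-1,1,1,-1,-1,1) *)
Definition s_plus (i : nat) : bool := (i %% 4 == 0)%N || (i %% 4 == 3)%N.
Definition smat : 'M[k]_8 := \matrix_(i, j) ((i == j)%:R * (if s_plus i then 1 else -1)).

(* Lie algebra h = Lie(SO_8/mu_2) = so_8 (char k <> 2) for the form Psi. *)
Definition in_h (Y : 'M[k]_8) : bool := Y^T *m Psi + Psi *m Y == 0.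

(* V = { Y in h : s Y s^-1 = -Y }  (s^-1 = s) *)
Definition in_V (Y : 'M[k]_8) : bool := in_h Y && (smat *m Y *m smat == - Y).

(* G(k) = (H^theta)^o(k): images in PGO^+_8(k) = GO^+_8(k)/k^x of the
   similitudes g (g^T Psi g = mu Psi, mu <> 0) commuting with s and proper on
   both eigenspaces W+ = <e0,e3,e4,e7>, W- = <e1,e2,e5,e6>.
   Scalars act trivially on V, so we quantify over these g directly. *)
Definition idxP (m : 'I_4) : 'I_8 :=
  match val m with 0 => inord 0 | 1 => inord 3 | 2 => inord 4 | _ => inord 7 end.
Definition idxM (m : 'I_4) : 'I_8 :=
  match val m with 0 => inord 1 | 1 => inord 2 | 2 => inord 5 | _ => inord 6 end.
Definition blockP (g : 'M[k]_8) : 'M[k]_4 := \matrix_(i, j) g (idxP i) (idxP j).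
Definition blockM (g : 'M[k]_8) : 'M[k]_4 := \matrix_(i, j) g (idxM i) (idxM j).

Definition in_Gk (g : 'M[k]_8) : Prop :=
  exists mu : k, [/\ mu != 0, g^T *m Psi *m g = mu *: Psi, g *m smat = smat *m g,
                     \det (blockP g) = mu ^+ 2 & \det (blockM g) = mu ^+ 2].

(* T-character of the (i,j) matrix entry is eps_i - eps_j, where
   t = diag(a,b,b^-1,a^-1,c,d,d^-1,c^-1); eps2 i m = twice the coefficient of
   a_(m+1) in eps_i (a1 = ac, a2 = a/c, a3 = bd, a4 = b/d). *)
Definition eps2 (i m : nat) : int :=
  match i, m with
  | 0, 0 | 0, 1 | 1, 2 | 1, 3 | 4, 0 | 5, 2 | 6, 3 | 7, 1 => Posz 1
  | 2, 2 | 2, 3 | 3, 0 | 3, 1 | 4, 1 | 5, 3 | 6, 2 | 7, 0 => Negz 0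
  | _, _ => Posz 0
  end.
End Setup.

(* Weights in Phi_V: 1/2 (e1 a1 + e2 a2 + e3 a3 + e4 a4), e_m = +1 iff (w m). *)
Definition wt := {ffun 'I_4 -> bool}.
Definition sgnz (b : bool) : int := if b then Posz 1 else Negz 0.
Definition mkwt (b1 b2 b3 b4 : bool) : wt :=
  [ffun m : 'I_4 => nth false [:: b1; b2; b3; b4] m].

Definition entry_wt (i j : 'I_8) (a : wt) : bool :=
  [forall m : 'I_4, (eps2 i m - eps2 j m)%R == sgnz (a m)].

Definition wcomp (k : fieldType) (v : 'M[k]_8) (a : wt) : 'M[k]_8 :=
  \matrix_(i, j) (if entry_wt i j a then v i j else 0).

(* partial order: a >= b iff n_i(a) >= n_i(b) for all i *)
Definition wt_ge (a b : wt) : bool := [forall m : 'I_4, b m ==> a m].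

Definition lambda (M : {set wt}) : {set wt} :=
  [set a | (a \notin M) && [forall b, ((b \notin M) && wt_ge b a) ==> (b == a)]].

Definition S1 : {set wt} :=
  [set mkwt true true true true; mkwt true false true true;
       mkwt true true false true; mkwt true true true false].
Definition S2 : {set wt} :=
  [set mkwt true true true true; mkwt false true true true;
       mkwt true false true true; mkwt true true true false].
Definition S3 : {set wt} :=
  [set mkwt true true true true; mkwt false true true true;
       mkwt true true false true; mkwt true true true false].
Definition S4 : {set wt} :=
  [set mkwt true true true true; mkwt false true true true;
       mkwt true false true true; mkwt true true false true].

Section Setup2.
Variable k : fieldType.

(* Discriminant of h restricted to V: for Y in so_8, char_poly Y = q(x^2);
   Delta(Y) = prod_{roots} alpha(Y_ss) = (up to sign) disc(q), taken here as
   resultant(q, q') (q monic, so this is disc q up to sign). *)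
Definition qpoly (Y : 'M[k]_8) : {poly k} := \poly_(i < 5) (char_poly Y)`_(2 * i).
Definition Delta (Y : 'M[k]_8) : k := resultant (qpoly Y) (qpoly Y)^`().

Definition E0 : 'M[k]_8 :=
  \matrix_(i, j)
   (match val i, val j with
    | 0, 1 | 1, 4 | 4, 5 | 4, 6 => 1
    | 2, 3 | 5, 7 | 6, 7 | 7, 2 => -1
    | _, _ => 0 end).

(* rho-check(t) = diag(t^3,t^2,t^-2,t^-3,t,1,1,t^-1) *)
Definition rhow (i : nat) : int :=
  match i with 0 => 3 | 1 => 2 | 2 => -2 | 3 => -3 | 4 => 1 | 5 => 0 | 6 => 0 | _ => -1 end.
Definition h0 : 'M[k]_8 := \matrix_(i, j) ((i == j)%:R * ((2 * rhow i)%:~R)).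

Definition lie (X Y : 'M[k]_8) : 'M[k]_8 := X *m Y - Y *m X.

(* F0 in V with Ad rho-check(t) F0 = t^-1 F0 (i.e. only entries of rho-weight -1)
   and [E0, F0] = d rho-check(2). *)
Definition isF0 (F : 'M[k]_8) : Prop :=
  [/\ in_V F,
      (forall i j : 'I_8, rhow i - rhow j != -1 -> F i j = 0)
    & lie E0 F = h0].

Definition in_kappa (F : 'M[k]_8) (u : 'M[k]_8) : Prop :=
  exists X, [/\ in_h X, lie X F = 0 & u = E0 + X].

Definition permmx (f : nat -> nat) : 'M[k]_8 := \matrix_(i, j) (val j == f (val i))%:R.
Definition sigma_mx : 'M[k]_8 := permmx (fun i => if (i < 4)%N then i else (11 - i)%N).
Definition tau_mx : 'M[k]_8 :=
  permmx (fun i => if odd i then i.-1 else i.+1).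

(* W_0 = subgroup generated by sigma, tau (finite, so the generated monoid) *)
Inductive W0 : 'M[k]_8 -> Prop :=
  | W0_1 : W0 1%:M
  | W0_s w : W0 w -> W0 (sigma_mx *m w)
  | W0_t w : W0 w -> W0 (tau_mx *m w).

(* v lies in a trivial orbit: v = g . (w . kappa_b) with g in G(k), w in W_0;
   necessarily b = pi(v), so kappa_b is the point of kappa(k) over pi(v). *)
Definition trivial_orbit (v : 'M[k]_8) : Prop :=
  exists F, isF0 F /\
  exists u w g, [/\ in_kappa F u, W0 w, in_Gk g &
     v = g *m (w *m u *m invmx w) *m invmx g].
End Setup2.

(* Main.v *)
Require Import Defs.
From HB Require Import structures.
From mathcomp Require Import all_boot all_order all_algebra.
From mathcomp Require Import ring.
Set Implicit Arguments. Unset Strict Implicit. Unset Printing Implicit Defensive.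
Import Order.TTheory GRing.Theory Num.Theory.
Local Open Scope ring_scope.

Ltac mxexp := do 4 (rewrite ?mxE ?big_ord_recr ?big_ord0 /=).

Ltac ord8 i := let Hi := fresh "Hi" in
  case: i => [[|[|[|[|[|[|[|[|?]]]]]]]] Hi] //.

Section S.
Variable k : fieldType.
Definition mkL (L : seq k) : 'M[k]_8 := \matrix_(i, j) nth 0 L (8 * i + j).
Definition prn (i : nat) : nat := nth 0%N [:: 3; 2; 1; 0; 7; 6; 5; 4]%N i.
Lemma prn_lt i : (prn i < 8)%N.
Proof. by do 8 (case: i => [|i] //); case: i. Qed.
Lemma prnK i : (i < 8)%N -> prn (prn i) = i.
Proof. by do 8 (case: i => [|i] //). Qed.
Definition prI (i : 'I_8) : 'I_8 := Ordinal (prn_lt i).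

Lemma Psi_entry (i j : 'I_8) : Psi k i j = (j == prI i)%:R.
Proof. by rewrite mxE; ord8 i; ord8 j. Qed.
Lemma Psi_entry' (i j : 'I_8) : Psi k i j = (i == prI j)%:R.
Proof. by rewrite mxE; ord8 i; ord8 j. Qed.

Lemma PsiM (A : 'M[k]_8) i j : (Psi k *m A) i j = A (prI i) j.
Proof.
rewrite mxE (bigD1 (prI i)) //= Psi_entry eqxx mul1r big1 ?addr0 // => l Hl.
by rewrite Psi_entry (negbTE Hl) mul0r.
Qed.
Lemma MPsi (A : 'M[k]_8) i j : (A *m Psi k) i j = A i (prI j).
Proof.
rewrite mxE (bigD1 (prI j)) //= Psi_entry' eqxx mulr1 big1 ?addr0 // => l Hl.
by rewrite Psi_entry' (negbTE Hl) mulr0.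
Qed.
Definition sgn (i : nat) : k := if s_plus i then 1 else -1.
Lemma smatM (A : 'M[k]_8) i j : (smat k *m A) i j = sgn i * A i j.
Proof.
rewrite mxE (bigD1 i) //= mxE eqxx mul1r big1 ?addr0 // => l Hl.
by rewrite mxE eq_sym (negbTE Hl) mul0r mul0r.
Qed.
Lemma Msmat (A : 'M[k]_8) i j : (A *m smat k) i j = A i j * sgn j.
Proof.
rewrite mxE (bigD1 j) //= mxE eqxx mul1r big1 ?addr0 // => l Hl.
by rewrite mxE (negbTE Hl) mul0r mulr0.
Qed.

Definition atn n (A : 'M[k]_n.+1) (a b : nat) : k := A (inord a) (inord b).
Arguments atn : simpl never.
Lemma atnE n (A : 'M[k]_n.+1) i j : A i j = atn A i j.
Proof. by rewrite /atn !inord_val. Qed.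

Section InV.
Variable v : 'M[k]_8.
Hypothesis hv : in_V v.
Hypothesis h2 : (2 : k) != 0.

Lemma ent_rel a b : (a < 8)%N -> (b < 8)%N -> atn v a b = - atn v (prn b) (prn a).
Proof.
move=> Ha Hb; case/andP: hv => /eqP/matrixP/(_ (inord b) (inord (prn a))) + _.
rewrite mxE MPsi PsiM !mxE /atn /prI /=.
have -> : (Ordinal (prn_lt (@inord 7 (prn a)))) = inord a :> 'I_8.
  by apply: ord_inj; rewrite /= !inordK ?prnK // prn_lt.
have -> : (Ordinal (prn_lt (@inord 7 b))) = inord (prn b) :> 'I_8.
  by apply: ord_inj; rewrite /= !inordK ?prnK // prn_lt.
by move/eqP; rewrite addr_eq0 => /eqP.
Qed.

Lemma ent_same a b : (a < 8)%N -> (b < 8)%N -> s_plus a = s_plus b -> atn v a b = 0.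
Proof.
move=> Ha Hb Hs; case/andP: hv => _ /eqP/matrixP/(_ (inord a) (inord b)).
rewrite Msmat smatM mxE -/(atn v a b) /sgn !inordK // Hs.
have E : forall x : k, (if s_plus b then 1 else -1) * x * (if s_plus b then 1 else -1) = x.
  by move=> x; case: (s_plus b); ring.
rewrite E => /eqP; rewrite -addr_eq0 -mulr2n -mulr_natr mulf_eq0 => /orP [/eqP //|].
by move/negbTE: h2 => ->.
Qed.
End InV.

Definition SGL : seq k := [:: 0; 1; 1; 0; 0; 1; 1; 0; 1; 0; 0; -1; 1; 0; 0; 1; 1; 0; 0; -1; 1; 0; 0; 1; 0; -1; -1; 0; 0; 1; 1; 0; 0; -1; -1; 0; 0; 1; 1; 0; -1; 0; 0; -1; 1; 0; 0; -1; -1; 0; 0; -1; 1; 0; 0; -1; 0; -1; -1; 0; 0; -1; -1; 0].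
Definition WIL : seq nat := [:: 0; 4; 0; 0; 0; 1; 2; 0; 8; 0; 0; 0; 5; 0; 0; 3; 15; 0; 0; 4; 12; 0; 0; 9; 0; 15; 8; 0; 0; 13; 14; 0; 0; 9; 3; 0; 0; 6; 7; 0; 14; 0; 0; 2; 10; 0; 0; 7; 13; 0; 0; 1; 11; 0; 0; 6; 0; 12; 5; 0; 0; 11; 10; 0]%N.
Definition RIL : seq nat := [:: 0; 0; 0; 1; 0; 1; 4; 4; 1; 2; 5; 6; 2; 3; 3; 2]%N.
Definition RJL : seq nat := [:: 2; 5; 6; 7; 1; 4; 5; 6; 0; 7; 4; 4; 4; 5; 6; 0]%N.
Definition nmat (z0 z1 z2 z3 : k) : 'M[k]_8 := mkL [:: (1); 0; 0; 0; 0; 0; 0; 0; 0; (1); 0; 0; 0; 0; 0; 0; 0; (- (z0 * z1)); (1); 0; 0; (z0); (z1); 0; (- (z2 * z3)); 0; 0; (1); (z3); 0; 0; (z2); (- (z2)); 0; 0; 0; (1); 0; 0; 0; 0; (- (z1)); 0; 0; 0; (1); 0; 0; 0; (- (z0)); 0; 0; 0; 0; (1); 0; (- (z3)); 0; 0; 0; 0; 0; 0; (1)].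
Definition Xmat (w0 w1 w2 w3 : k) : 'M[k]_8 := mkL [:: 0; 0; 0; 0; 0; 0; 0; 0; (3 * w3); 0; 0; 0; 0; 0; 0; 0; (w0); 0; 0; 0; (- (w1) - w2); 0; 0; (- (5 * w3)); 0; (- (w0)); (- (3 * w3)); 0; 0; (w1); (w2); 0; 0; (5 * w3); 0; 0; 0; 0; 0; 0; (- (w2)); 0; 0; 0; (3 * w3); 0; 0; 0; (- (w1)); 0; 0; 0; (3 * w3); 0; 0; 0; 0; (w1 + w2); 0; 0; 0; (- (3 * w3)); (- (3 * w3)); 0].
Definition kx (z0 z1 z2 z3 w0 w1 w2 w3 : k) : nat -> k := fun i => nth 0 [:: 0; 0; 0; 0; 1; 1; 1; 1; (3 * w3 + z2); (- (5 * w3) - z0 - z1 + z2); (3 * w3 - z1); (3 * w3 - z0); (- (w1) - w2 + 3 * w3 * z0 + 3 * w3 * z1 - z0 * z1 + z3); (w1 + 3 * w3 * z0 - 3 * w3 * z2 + z0 * z2 + z3); (w2 + 3 * w3 * z1 - 3 * w3 * z2 + z1 * z2 + z3); (w0 - w1 * z1 - w1 * z2 - w2 * z0 - w2 * z2 - 3 * w3 * z0 * z1 + 3 * w3 * z0 * z2 + 3 * w3 * z1 * z2 - 5 * w3 * z3 - z0 * z1 * z2 - z0 * z3 - z1 * z3 + z2 * z3)] i.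
Definition F0L : seq k := [:: 0; 0; 0; 0; 0; 0; 0; 0; 6; 0; 0; 0; 0; 0; 0; 0; 0; 0; 0; 0; 0; 0; 0; -10; 0; 0; -6; 0; 0; 0; 0; 0; 0; 10; 0; 0; 0; 0; 0; 0; 0; 0; 0; 0; 6; 0; 0; 0; 0; 0; 0; 0; 6; 0; 0; 0; 0; 0; 0; 0; 0; -6; -6; 0].
Definition ttL (t0 t1 t4 t5 mu : k) : seq k := [:: t0; t1; mu / t1; mu / t0; t4; t5; mu / t5; mu / t4].
Definition tmat (t0 t1 t4 t5 mu : k) : 'M[k]_8 := mkL [:: (t0); 0; 0; 0; 0; 0; 0; 0; 0; (t1); 0; 0; 0; 0; 0; 0; 0; 0; (mu / t1); 0; 0; 0; 0; 0; 0; 0; 0; (mu / t0); 0; 0; 0; 0; 0; 0; 0; 0; (t4); 0; 0; 0; 0; 0; 0; 0; 0; (t5); 0; 0; 0; 0; 0; 0; 0; 0; (mu / t5); 0; 0; 0; 0; 0; 0; 0; 0; (mu / t4)].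
Definition PM_sig : seq nat := [:: 0; 2; 1; 5; 4; 3; 10; 11; 8; 12; 6; 7; 9; 14; 13; 15]%N.
Definition SN_sig : seq k := [:: 1; 1; 1; 1; 1; 1; -1; -1; 1; 1; -1; -1; 1; 1; 1; 1].
Definition PM_tau : seq nat := [:: 0; 5; 3; 2; 8; 1; 10; 7; 4; 14; 6; 11; 13; 12; 9; 15]%N.
Definition SN_tau : seq k := [:: -1; 1; 1; 1; 1; 1; 1; -1; 1; 1; 1; -1; 1; 1; 1; -1].
Definition PM_st : seq nat := [:: 0; 3; 5; 1; 8; 2; 6; 11; 4; 13; 10; 7; 14; 9; 12; 15]%N.
Definition SN_st : seq k := [:: -1; 1; 1; 1; 1; 1; -1; 1; 1; 1; -1; 1; 1; 1; 1; -1].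

Definition Vx (x : nat -> k) : 'M[k]_8 :=
  \matrix_(i, j) (nth 0 SGL (8 * i + j) * x (nth 0%N WIL (8 * i + j))).

Definition params (v : 'M[k]_8) : nat -> k :=
  fun q => atn v (nth 0%N RIL q) (nth 0%N RJL q).

Lemma V_form v : in_V v -> (2 : k) != 0 -> v = Vx (params v).
Proof.
move=> hv h2; apply/matrixP => i j; rewrite mxE (atnE v) /params.
ord8 i; ord8 j; rewrite /=;
 first [ by rewrite mul1r | by rewrite mul0r (ent_same hv h2)
       | by rewrite [LHS](ent_rel hv) // /= mulN1r ].
Qed.
Lemma det2 (A : 'M[k]_2) : \det A = atn A 0%N 0%N * atn A 1%N 1%N - atn A 0%N 1%N * atn A 1%N 0%N.
Proof.
rewrite (expand_det_row A ord0) !big_ord_recr big_ord0 /= /cofactor !det_mx11 !mxE.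
rewrite !(atnE A) /=. ring.
Qed.

Lemma det3 (A : 'M[k]_3) : \det A =
  atn A 0%N 0%N * (atn A 1%N 1%N * atn A 2%N 2%N - atn A 1%N 2%N * atn A 2%N 1%N)
- atn A 0%N 1%N * (atn A 1%N 0%N * atn A 2%N 2%N - atn A 1%N 2%N * atn A 2%N 0%N)
+ atn A 0%N 2%N * (atn A 1%N 0%N * atn A 2%N 1%N - atn A 1%N 1%N * atn A 2%N 0%N).
Proof.
rewrite (expand_det_row A ord0) !big_ord_recr big_ord0 /= /cofactor !det2 /atn !mxE.
rewrite !(atnE A) /= !inordK //= /bump /=. ring.
Qed.
Definition det4f (f : nat -> nat -> k) : k :=
  f 0%N 0%N * (f 1%N 1%N * (f 2%N 2%N * f 3%N 3%N - f 2%N 3%N * f 3%N 2%N) - f 1%N 2%N * (f 2%N 1%N * f 3%N 3%N - f 2%N 3%N * f 3%N 1%N) + f 1%N 3%N * (f 2%N 1%N * f 3%N 2%N - f 2%N 2%N * f 3%N 1%N))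
  - f 0%N 1%N * (f 1%N 0%N * (f 2%N 2%N * f 3%N 3%N - f 2%N 3%N * f 3%N 2%N) - f 1%N 2%N * (f 2%N 0%N * f 3%N 3%N - f 2%N 3%N * f 3%N 0%N) + f 1%N 3%N * (f 2%N 0%N * f 3%N 2%N - f 2%N 2%N * f 3%N 0%N))
  + f 0%N 2%N * (f 1%N 0%N * (f 2%N 1%N * f 3%N 3%N - f 2%N 3%N * f 3%N 1%N) - f 1%N 1%N * (f 2%N 0%N * f 3%N 3%N - f 2%N 3%N * f 3%N 0%N) + f 1%N 3%N * (f 2%N 0%N * f 3%N 1%N - f 2%N 1%N * f 3%N 0%N))
  - f 0%N 3%N * (f 1%N 0%N * (f 2%N 1%N * f 3%N 2%N - f 2%N 2%N * f 3%N 1%N) - f 1%N 1%N * (f 2%N 0%N * f 3%N 2%N - f 2%N 2%N * f 3%N 0%N) + f 1%N 2%N * (f 2%N 0%N * f 3%N 1%N - f 2%N 1%N * f 3%N 0%N)).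

Lemma det4 (A : 'M[k]_4) : \det A = det4f (atn A).
Proof.
rewrite (expand_det_row A ord0) !big_ord_recr big_ord0 /= /cofactor !det3 /atn !mxE.
rewrite !(atnE A) /= !inordK //= /det4f /bump /= ?add0n ?add1n. rewrite /atn. ring.
Qed.
End S.

Ltac mxtac := let i := fresh "i" in let j := fresh "j" in
  apply/matrixP; intros i j; mxexp; ord8 i; ord8 j; rewrite /=.

Section S.
Variable k : fieldType.

Lemma kostant (z0 z1 z2 z3 w0 w1 w2 w3 : k) :
  Vx (kx z0 z1 z2 z3 w0 w1 w2 w3) *m nmat z0 z1 z2 z3 =
  nmat z0 z1 z2 z3 *m (E0 k + Xmat w0 w1 w2 w3).
Proof. mxtac; rewrite /kx /=; ring. Qed.

Lemma torus (x : nat -> k) (t0 t1 t4 t5 mu : k) :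
  t0 != 0 -> t1 != 0 -> t4 != 0 -> t5 != 0 -> mu != 0 ->
  Vx x *m tmat t0 t1 t4 t5 mu = tmat t0 t1 t4 t5 mu *m
    Vx (fun q => x q * nth 0 (ttL t0 t1 t4 t5 mu) (nth 0%N RJL q)
                     / nth 0 (ttL t0 t1 t4 t5 mu) (nth 0%N RIL q)).
Proof. move=> H0 H1 H4 H5 Hm. (mxtac; field; by rewrite ?H0 ?H1 ?H4 ?H5 ?Hm). Qed.
End S.


Section S.
Variable k : fieldType.
Definition F0m : 'M[k]_8 := mkL (F0L k).

Lemma X_in_h (w0 w1 w2 w3 : k) : in_h (Xmat w0 w1 w2 w3).
Proof. apply/eqP. (mxtac; ring). Qed.

Lemma X_lie (w0 w1 w2 w3 : k) : lie (Xmat w0 w1 w2 w3) F0m = 0.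
Proof. rewrite /lie. (mxtac; ring). Qed.

Lemma F0_in_V : in_V F0m.
Proof. apply/andP; split; apply/eqP; mxtac; ring. Qed.

Lemma F0_rho : forall i j : 'I_8, rhow i - rhow j != -1 -> F0m i j = 0.
Proof. move=> i j; rewrite mxE; ord8 i; ord8 j; rewrite /=. Qed.

Lemma F0_lie : lie (E0 k) F0m = h0 k.
Proof. rewrite /lie. (mxtac; ring). Qed.
End S.


Section S.
Variable k : fieldType.

Lemma val_inord n m : (m < n.+1)%N -> val (@inord n m) = m.
Proof. exact: inordK. Qed.

Lemma blockP_at (g : 'M[k]_8) a b : (a < 4)%N -> (b < 4)%N ->
  atn (blockP g) a b = atn g (nth 0%N [:: 0; 3; 4; 7]%N a) (nth 0%N [:: 0; 3; 4; 7]%N b).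
Proof.
move=> Ha Hb; rewrite /atn mxE /idxP !val_inord //.
by case: a Ha => [|[|[|[|a]]]] Ha //; case: b Hb => [|[|[|[|b]]]] Hb.
Qed.
Lemma blockM_at (g : 'M[k]_8) a b : (a < 4)%N -> (b < 4)%N ->
  atn (blockM g) a b = atn g (nth 0%N [:: 1; 2; 5; 6]%N a) (nth 0%N [:: 1; 2; 5; 6]%N b).
Proof.
move=> Ha Hb; rewrite /atn mxE /idxM !val_inord //.
by case: a Ha => [|[|[|[|a]]]] Ha //; case: b Hb => [|[|[|[|b]]]] Hb.
Qed.
Lemma atn_mkL (L : seq k) a b : (a < 8)%N -> (b < 8)%N -> atn (mkL L) a b = nth 0 L (8 * a + b).
Proof. by move=> Ha Hb; rewrite /atn mxE !inordK. Qed.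

Lemma tmat_G (t0 t1 t4 t5 mu : k) :
  t0 != 0 -> t1 != 0 -> t4 != 0 -> t5 != 0 -> mu != 0 -> in_Gk (tmat t0 t1 t4 t5 mu).
Proof.
move=> H0 H1 H4 H5 Hm; exists mu; split => //.
- mxtac; field; by rewrite ?H0 ?H1 ?H4 ?H5 ?Hm.
- mxtac; ring.
- rewrite det4 /det4f !blockP_at // /= !atn_mkL //=; field; by rewrite ?H0 ?H1 ?H4 ?H5 ?Hm.
- rewrite det4 /det4f !blockM_at // /= !atn_mkL //=; field; by rewrite ?H0 ?H1 ?H4 ?H5 ?Hm.
Qed.

Lemma nmat_G (z0 z1 z2 z3 : k) : in_Gk (nmat z0 z1 z2 z3).
Proof.
exists 1; split => //.
- by rewrite oner_eq0.
- mxtac; ring.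
- mxtac; ring.
- rewrite det4 /det4f !blockP_at // /= !atn_mkL //=; ring.
- rewrite det4 /det4f !blockM_at // /= !atn_mkL //=; ring.
Qed.
End S.


Section S.
Variable k : fieldType.
Hypothesis h2 : (2 : k) != 0.

Lemma val_inord' n m : (m < n.+1)%N -> val (@inord n m) = m.
Proof. exact: inordK. Qed.

Lemma sum8_split (F : 'I_8 -> k) :
  \sum_(l < 8) F l = \sum_(r < 4) F (idxP r) + \sum_(r < 4) F (idxM r).
Proof.
pose G := fun n => F (inord n).
have FE : forall l, F l = G (val l) by move=> l; rewrite /G inord_val.
rewrite !big_ord_recr !big_ord0 /= !FE /idxP /idxM /= !val_inord' //.
rewrite /G; ring.
Qed.

Lemma idxP_plus (a : 'I_4) : s_plus (idxP a).
Proof. by case: a => [[|[|[|[|a]]]] Ha] //; rewrite /idxP /= val_inord'. Qed.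
Lemma idxM_minus (a : 'I_4) : s_plus (idxM a) = false.
Proof. by case: a => [[|[|[|[|a]]]] Ha] //; rewrite /idxM /= val_inord'. Qed.

Lemma off_block (g : 'M[k]_8) : g *m smat k = smat k *m g ->
  forall i j : 'I_8, s_plus i != s_plus j -> g i j = 0.
Proof.
move=> /matrixP Hg i j Hij; have := Hg i j; rewrite Msmat smatM /sgn.
case: (s_plus i) Hij; case: (s_plus j) => // _.
- rewrite mulrN1 mul1r => /eqP; rewrite eq_sym -addr_eq0 -mulr2n -mulr_natr mulf_eq0 => /orP [/eqP //|].
  by move/negbTE: h2 => ->.
- rewrite mulr1 mulN1r => /eqP; rewrite -addr_eq0 -mulr2n -mulr_natr mulf_eq0 => /orP [/eqP //|].
  by move/negbTE: h2 => ->.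
Qed.

Lemma blockP_mul (A B : 'M[k]_8) : A *m smat k = smat k *m A ->
  blockP (A *m B) = blockP A *m blockP B.
Proof.
move=> HA; apply/matrixP => a b; rewrite [LHS]mxE [LHS]mxE sum8_split.
rewrite [X in _ + X]big1 ?addr0.
- by rewrite mxE; apply: eq_bigr => r _; rewrite !mxE.
- move=> r _; rewrite (off_block HA) ?mul0r //.
  by rewrite idxP_plus idxM_minus.
Qed.
Lemma blockM_mul (A B : 'M[k]_8) : A *m smat k = smat k *m A ->
  blockM (A *m B) = blockM A *m blockM B.
Proof.
move=> HA; apply/matrixP => a b; rewrite [LHS]mxE [LHS]mxE sum8_split.
rewrite [X in X + _]big1 ?add0r.
- by rewrite mxE; apply: eq_bigr => r _; rewrite !mxE.
- move=> r _; rewrite (off_block HA) ?mul0r //.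
  by rewrite idxP_plus idxM_minus.
Qed.

Lemma in_Gk_mul (A B : 'M[k]_8) : in_Gk A -> in_Gk B -> in_Gk (A *m B).
Proof.
case=> m1 [Hm1 HA1 HA2 HA3 HA4]; case=> m2 [Hm2 HB1 HB2 HB3 HB4].
exists (m1 * m2); split.
- by rewrite mulf_neq0.
- have -> : (A *m B)^T *m Psi k *m (A *m B) = B^T *m (A^T *m Psi k *m A) *m B.
    by rewrite trmx_mul !mulmxA.
  by rewrite HA1 -scalemxAr -scalemxAl HB1 scalerA.
- by rewrite -mulmxA HB2 !mulmxA HA2.
- by rewrite blockP_mul // det_mulmx HA3 HB3 exprMn.
- by rewrite blockM_mul // det_mulmx HA4 HB4 exprMn.
Qed.

Lemma PsiPsi : Psi k *m Psi k = 1%:M.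
Proof. mxtac; ring. Qed.

Lemma Gk_unit (g : 'M[k]_8) : in_Gk g -> g \in unitmx.
Proof.
case=> m [Hm H1 _ _ _].
have E : (m^-1 *: (Psi k *m g^T)) *m (Psi k *m g) = 1%:M.
  rewrite -scalemxAl.
  have -> : Psi k *m g^T *m (Psi k *m g) = Psi k *m (g^T *m Psi k *m g) by rewrite !mulmxA.
  by rewrite H1 -scalemxAr PsiPsi scalerA mulVf // scale1r.
have [_ U] := mulmx1_unit E.
by move: U; rewrite unitmx_mul => /andP [].
Qed.

Lemma conj_G (w : 'M[k]_8) (eps : k) :
  w^T *m w = 1%:M -> w *m w^T = 1%:M -> w^T *m Psi k *m w = Psi k ->
  w^T *m smat k = eps *: (smat k *m w^T) -> smat k *m w = eps *: (w *m smat k) ->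
  (forall g, \det (blockP (w *m g *m w^T)) = \det (blockP g) \/
             \det (blockP (w *m g *m w^T)) = \det (blockM g)) ->
  (forall g, \det (blockM (w *m g *m w^T)) = \det (blockP g) \/
             \det (blockM (w *m g *m w^T)) = \det (blockM g)) ->
  forall g, in_Gk g -> in_Gk (w *m g *m w^T).
Proof.
move=> HwTw HwwT HPsi Hs1 Hs2 HdP HdM g [m [Hm H1 H2 H3 H4]].
exists m; split => //.
- have -> : (w *m g *m w^T)^T *m Psi k *m (w *m g *m w^T)
           = w *m (g^T *m (w^T *m Psi k *m w) *m g) *m w^T.
    by rewrite !trmx_mul trmxK !mulmxA.
  rewrite HPsi H1 -scalemxAr -scalemxAl.
  congr (_ *: _); by rewrite -{1}HPsi !mulmxA HwwT mul1mx -mulmxA HwwT mulmx1.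
- have L : w *m g *m w^T *m smat k = eps *: (w *m (g *m smat k) *m w^T).
    by rewrite -!mulmxA Hs1 -!scalemxAr !mulmxA.
  have R : smat k *m (w *m g *m w^T) = eps *: (w *m (smat k *m g) *m w^T).
    by rewrite !mulmxA Hs2 -!scalemxAl.
  by rewrite L R H2.
- by case: (HdP g) => ->.
- by case: (HdM g) => ->.
Qed.
End S.

Section S.
Variable k : fieldType.
Definition mkF (F : nat -> nat -> k) : 'M[k]_8 := \matrix_(i, j) F i j.
Lemma atn_mkF F a b : (a < 8)%N -> (b < 8)%N -> atn (mkF F) a b = F a b.
Proof. by move=> Ha Hb; rewrite /atn mxE !inordK. Qed.

Definition sigf (i : nat) : nat := if (i < 4)%N then i else (11 - i)%N.
Definition tauf (i : nat) : nat := if odd i then i.-1 else i.+1.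

Section Perm.
Variable f : nat -> nat.
Hypothesis f_lt : forall n, (n < 8)%N -> (f n < 8)%N.
Hypothesis fK : forall n, (n < 8)%N -> f (f n) = n.

Lemma permT : (permmx k f)^T = permmx k f.
Proof.
apply/matrixP => i j; rewrite !mxE; congr (_%:R); congr nat_of_bool.
by apply/idP/idP => /eqP E; apply/eqP; rewrite E fK ?ltn_ord.
Qed.

Lemma permM (A : 'M[k]_8) i j : (permmx k f *m A) i j = A (inord (f i)) j.
Proof.
rewrite mxE (bigD1 (inord (f i))) //= mxE val_inord ?f_lt // eqxx mul1r big1 ?addr0 // => l Hl.
rewrite mxE; case: eqP => [E|]; last by rewrite mul0r.
by move: Hl; rewrite -E inord_val eqxx.
Qed.

Lemma Mperm (A : 'M[k]_8) i j : (A *m permmx k f) i j = A i (inord (f j)).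
Proof.
rewrite mxE (bigD1 (inord (f j))) //= mxE val_inord ?f_lt // fK // eqxx mulr1 big1 ?addr0 // => l Hl.
rewrite mxE; case: eqP => [E|]; last by rewrite mulr0.
by move: Hl; rewrite E (fK (ltn_ord l)) inord_val eqxx.
Qed.

Lemma perm_conj (g : 'M[k]_8) : permmx k f *m g *m (permmx k f)^T = mkF (fun a b => atn g (f a) (f b)).
Proof. by apply/matrixP => i j; rewrite permT Mperm permM mxE /atn. Qed.
End Perm.

Lemma sigf_lt n : (n < 8)%N -> (sigf n < 8)%N.
Proof. by case: n => [|[|[|[|[|[|[|[|n]]]]]]]]. Qed.
Lemma sigfK n : (n < 8)%N -> sigf (sigf n) = n.
Proof. by case: n => [|[|[|[|[|[|[|[|n]]]]]]]]. Qed.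
Lemma tauf_lt n : (n < 8)%N -> (tauf n < 8)%N.
Proof. by case: n => [|[|[|[|[|[|[|[|n]]]]]]]]. Qed.
Lemma taufK n : (n < 8)%N -> tauf (tauf n) = n.
Proof. by case: n => [|[|[|[|[|[|[|[|n]]]]]]]]. Qed.

Lemma sigmaE : sigma_mx k = permmx k sigf. Proof. by []. Qed.
Lemma tauE : tau_mx k = permmx k tauf. Proof. by []. Qed.

Ltac ptac f_lt fK := let i := fresh "i" in let j := fresh "j" in
  apply/matrixP; intros i j;
  rewrite ?sigmaE ?tauE ?(permT fK) ?[(_ *: _) _ _]mxE;
  rewrite ?smatM ?Msmat ?(Mperm f_lt fK) ?(permM f_lt) ?smatM ?Msmat ?mxE;
  ord8 i; ord8 j; rewrite /= ?val_inord //= ?mxE /= ?val_inord //=.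

Lemma sig_TT : (sigma_mx k)^T *m sigma_mx k = 1%:M.
Proof. by ptac sigf_lt sigfK. Qed.

Lemma sig_T : sigma_mx k *m (sigma_mx k)^T = 1%:M. Proof. by ptac sigf_lt sigfK. Qed.
Lemma sig_Psi : (sigma_mx k)^T *m Psi k *m sigma_mx k = Psi k. Proof. by ptac sigf_lt sigfK. Qed.
Lemma sig_s1 : (sigma_mx k)^T *m smat k = 1 *: (smat k *m (sigma_mx k)^T).
Proof. apply/matrixP => i j; rewrite sigmaE ?(permT sigfK) [RHS]mxE ?smatM ?Msmat !mxE; ord8 i; ord8 j; rewrite /sgn /=; ring. Qed.
Lemma sig_s2 : smat k *m sigma_mx k = 1 *: (sigma_mx k *m smat k).
Proof. apply/matrixP => i j; rewrite sigmaE ?(permT sigfK) [RHS]mxE ?smatM ?Msmat !mxE; ord8 i; ord8 j; rewrite /sgn /=; ring. Qed.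
Lemma tau_TT : (tau_mx k)^T *m tau_mx k = 1%:M. Proof. by ptac tauf_lt taufK. Qed.
Lemma tau_T : tau_mx k *m (tau_mx k)^T = 1%:M. Proof. by ptac tauf_lt taufK. Qed.
Lemma tau_Psi : (tau_mx k)^T *m Psi k *m tau_mx k = Psi k. Proof. by ptac tauf_lt taufK. Qed.
Lemma tau_s1 : (tau_mx k)^T *m smat k = (-1) *: (smat k *m (tau_mx k)^T).
Proof. apply/matrixP => i j; rewrite tauE ?(permT taufK) [RHS]mxE ?smatM ?Msmat !mxE; ord8 i; ord8 j; rewrite /sgn /=; ring. Qed.
Lemma tau_s2 : smat k *m tau_mx k = (-1) *: (tau_mx k *m smat k).
Proof. apply/matrixP => i j; rewrite tauE ?(permT taufK) [RHS]mxE ?smatM ?Msmat !mxE; ord8 i; ord8 j; rewrite /sgn /=; ring. Qed.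

Lemma sig_conj (g : 'M[k]_8) : sigma_mx k *m g *m (sigma_mx k)^T = mkF (fun a b => atn g (sigf a) (sigf b)).
Proof. by rewrite sigmaE (perm_conj sigf_lt sigfK). Qed.
Lemma tau_conj (g : 'M[k]_8) : tau_mx k *m g *m (tau_mx k)^T = mkF (fun a b => atn g (tauf a) (tauf b)).
Proof. by rewrite tauE (perm_conj tauf_lt taufK). Qed.

Lemma sig_detP g : \det (blockP (sigma_mx k *m g *m (sigma_mx k)^T)) = \det (blockP g).
Proof. rewrite sig_conj !det4 /det4f !blockP_at // /= !atn_mkF //= /sigf /=; ring. Qed.
Lemma sig_detM g : \det (blockM (sigma_mx k *m g *m (sigma_mx k)^T)) = \det (blockM g).
Proof. rewrite sig_conj !det4 /det4f !blockM_at // /= !atn_mkF //= /sigf /=; ring. Qed.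
Lemma tau_detP g : \det (blockP (tau_mx k *m g *m (tau_mx k)^T)) = \det (blockM g).
Proof. rewrite tau_conj !det4 /det4f !blockP_at // !blockM_at // /= !atn_mkF //= /tauf /=; ring. Qed.
Lemma tau_detM g : \det (blockM (tau_mx k *m g *m (tau_mx k)^T)) = \det (blockP g).
Proof. rewrite tau_conj !det4 /det4f !blockP_at // !blockM_at // /= !atn_mkF //= /tauf /=; ring. Qed.

Lemma sig_Vx (x : nat -> k) : (sigma_mx k)^T *m Vx x *m sigma_mx k = Vx (fun q => nth 0 (SN_sig k) q * x (nth 0%N PM_sig q)).
Proof. ptac sigf_lt sigfK; ring. Qed.
Lemma tau_Vx (x : nat -> k) : (tau_mx k)^T *m Vx x *m tau_mx k = Vx (fun q => nth 0 (SN_tau k) q * x (nth 0%N PM_tau q)).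
Proof. ptac tauf_lt taufK; ring. Qed.
End S.

Definition WL : seq wt := [:: mkwt true true true true; mkwt true true false true; mkwt true true true false; mkwt true false true true; mkwt true true false false; mkwt false true true true; mkwt true false false true; mkwt true false true false; mkwt false false true true; mkwt true false false false; mkwt false true true false; mkwt false true false true; mkwt false true false false; mkwt false false false true; mkwt false false true false; mkwt false false false false].
Definition WNL : seq nat := [:: 15; 13; 14; 8; 12; 11; 10; 5; 9; 6; 7; 3; 4; 1; 2; 0]%N.
Definition wlist (q : nat) : wt := nth (mkwt false false false false) WL q.
Definition o4 (n : nat) : 'I_4 := inord n.
Definition wnum (a : wt) : nat :=
  nth 0%N WNL (8 * a (o4 0) + 4 * a (o4 1) + 2 * a (o4 2) + a (o4 3))%N.
Definition wof (i j : nat) : wt := [ffun m : 'I_4 => (eps2 i m - eps2 j m == 1)%R].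

Lemma wnum_wlist q : (q < 16)%N -> wnum (wlist q) = q.
Proof.
case: q => [|[|[|[|[|[|[|[|[|[|[|[|[|[|[|[|q]]]]]]]]]]]]]]]] // _; by rewrite /wnum /wlist /= /o4 !ffunE /= !inordK.
Qed.

Lemma entry_wt_eq (i j : 'I_8) a : entry_wt i j a -> a = wof i j.
Proof.
move/forallP => H; apply/ffunP => m; rewrite ffunE; move/eqP: (H m) => ->.
by case: (a m).
Qed.

Section S.
Variable k : fieldType.

Lemma wnum_wof (i j : 'I_8) : nth 0 (SGL k) (8 * i + j) != 0 ->
  wnum (wof i j) = nth 0%N WIL (8 * i + j).
Proof.
ord8 i; ord8 j; rewrite /= ?eqxx //; rewrite /wnum /o4 !ffunE !inordK //.
Qed.
End S.

Section S.
Variable k : fieldType.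

Lemma WIL_lt n : (nth 0%N WIL n < 16)%N.
Proof.
have A : all (fun a => a < 16)%N WIL by [].
case: (ltnP n (size WIL)) => H; first by apply: (allP A); apply: mem_nth.
by rewrite nth_default.
Qed.

Lemma Vx_ext (x y : nat -> k) : (forall q, (q < 16)%N -> x q = y q) -> Vx x = Vx y.
Proof. by move=> H; apply/matrixP => i j; rewrite !mxE H // WIL_lt. Qed.

Lemma solve (h14 : (14 : k) != 0) (h3 : (3 : k) != 0) (y : nat -> k) :
  exists z0 z1 z2 z3 w0 w1 w2 w3 : k,
    forall i, (i < 8)%N -> kx z0 z1 z2 z3 w0 w1 w2 w3 (8 + i) = y i.
Proof.
pose w3 := (y 0%N + y 2%N + y 3%N - y 1%N) / 14.
pose z0 := 3 * w3 - y 3%N. pose z1 := 3 * w3 - y 2%N. pose z2 := y 0%N - 3 * w3.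
pose A4 := 3 * w3 * z0 + 3 * w3 * z1 - z0 * z1.
pose A5 := 3 * w3 * z0 - 3 * w3 * z2 + z0 * z2.
pose A6 := 3 * w3 * z1 - 3 * w3 * z2 + z1 * z2.
pose z3 := (y 4%N + y 5%N + y 6%N - A4 - A5 - A6) / 3.
pose w1 := y 5%N - A5 - z3. pose w2 := y 6%N - A6 - z3.
pose w0 := y 7%N - (- w1 * z1 - w1 * z2 - w2 * z0 - w2 * z2 - 3 * w3 * z0 * z1
   + 3 * w3 * z0 * z2 + 3 * w3 * z1 * z2 - 5 * w3 * z3 - z0 * z1 * z2 - z0 * z3
   - z1 * z3 + z2 * z3).
exists z0, z1, z2, z3, w0, w1, w2, w3.
move=> i; case: i => [|[|[|[|[|[|[|[|i]]]]]]]] // _; rewrite /kx /=;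
  rewrite /w0 /w1 /w2 /z3 /A4 /A5 /A6 /z0 /z1 /z2 /w3; field; by rewrite ?h14 ?h3.
Qed.

Lemma core (h2 : (2 : k) != 0) (h3 : (3 : k) != 0) (h14 : (14 : k) != 0) (x : nat -> k) :
  x 0%N = 0 -> x 1%N = 0 -> x 2%N = 0 -> x 3%N = 0 ->
  x 4%N != 0 -> x 5%N != 0 -> x 6%N != 0 -> x 7%N != 0 ->
  exists g u, [/\ in_Gk g, in_kappa (F0m k) u & Vx x *m g = g *m u].
Proof.
move=> X0 X1 X2 X3 X4 X5 X6 X7.
pose t0 : k := 1. pose t1 := (x 4%N)^-1. pose t4 := t1 / x 5%N. pose t5 := t4 / x 6%N.
pose mu := t4 * t5 / x 7%N.
have N0 : t0 != 0 by rewrite oner_neq0.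
have N1 : t1 != 0 by rewrite invr_neq0.
have N4 : t4 != 0 by rewrite mulf_neq0 ?invr_neq0.
have N5 : t5 != 0 by rewrite mulf_neq0 ?invr_neq0.
have Nm : mu != 0 by rewrite !mulf_neq0 ?invr_neq0.
pose x' := fun q => x q * nth 0 (ttL t0 t1 t4 t5 mu) (nth 0%N RJL q)
                     / nth 0 (ttL t0 t1 t4 t5 mu) (nth 0%N RIL q).
have [z0 [z1 [z2 [z3 [w0 [w1 [w2 [w3 Hkx]]]]]]]] := solve h14 h3 (fun i => x' (8 + i)%N).
have Ex : Vx x' = Vx (kx z0 z1 z2 z3 w0 w1 w2 w3).
  apply: Vx_ext => q; case: q => [|[|[|[|[|[|[|[|q]]]]]]]] Hq.
  - by rewrite /x' /= X0 !mul0r.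
  - by rewrite /x' /= X1 !mul0r.
  - by rewrite /x' /= X2 !mul0r.
  - by rewrite /x' /= X3 !mul0r.
  - rewrite /x' /kx /= /mu /t5 /t4 /t1 /t0; field; by rewrite ?X4 ?X5 ?X6 ?X7 ?oner_neq0.
  - rewrite /x' /kx /= /mu /t5 /t4 /t1 /t0; field; by rewrite ?X4 ?X5 ?X6 ?X7 ?oner_neq0.
  - rewrite /x' /kx /= /mu /t5 /t4 /t1 /t0; field; by rewrite ?X4 ?X5 ?X6 ?X7 ?oner_neq0.
  - rewrite /x' /kx /= /mu /t5 /t4 /t1 /t0; field; by rewrite ?X4 ?X5 ?X6 ?X7 ?oner_neq0.
  - change (x' (8 + q)%N = kx z0 z1 z2 z3 w0 w1 w2 w3 (8 + q)%N).
    by rewrite Hkx.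
exists (tmat t0 t1 t4 t5 mu *m nmat z0 z1 z2 z3), (E0 k + Xmat w0 w1 w2 w3).
split.
- apply: (in_Gk_mul h2); [exact: tmat_G | exact: nmat_G].
- by exists (Xmat w0 w1 w2 w3); split; [exact: X_in_h | exact: X_lie |].
- rewrite mulmxA (torus x N0 N1 N4 N5 Nm) -/x' -mulmxA Ex kostant.
  by rewrite !mulmxA.
Qed.
End S.

Lemma val_inord4 n m : (m < n.+1)%N -> val (@inord n m) = m.
Proof. exact: inordK. Qed.

Lemma mkwt_eq a1 a2 a3 a4 b1 b2 b3 b4 :
  (mkwt a1 a2 a3 a4 == mkwt b1 b2 b3 b4) = [&& a1 == b1, a2 == b2, a3 == b3 & a4 == b4].
Proof.
apply/idP/idP => [/eqP /ffunP H | /and4P [/eqP-> /eqP-> /eqP-> /eqP->] //].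
have := H (o4 0); have := H (o4 1); have := H (o4 2); have := H (o4 3).
by rewrite !ffunE /o4 !val_inord4 //= => -> -> -> ->; rewrite !eqxx.
Qed.

Lemma wt_eta (b : wt) : b = mkwt (b (o4 0)) (b (o4 1)) (b (o4 2)) (b (o4 3)).
Proof.
apply/ffunP => m; rewrite ffunE; case: m => [[|[|[|[|m]]]] Hm] //=;
  congr (b _); apply: ord_inj; by rewrite /o4 /= val_inord4.
Qed.

Lemma wt_ge_mk a1 a2 a3 a4 b1 b2 b3 b4 :
  wt_ge (mkwt a1 a2 a3 a4) (mkwt b1 b2 b3 b4) = [&& b1 ==> a1, b2 ==> a2, b3 ==> a3 & b4 ==> a4].
Proof.
apply/forallP/and4P => [H|[H1 H2 H3 H4] m].
- have := H (o4 0); have := H (o4 1); have := H (o4 2); have := H (o4 3).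
  by rewrite !ffunE /o4 !val_inord4.
- by rewrite !ffunE; case: m => [[|[|[|[|m]]]] Hm].
Qed.

Ltac lamtac :=
  rewrite /wlist /= inE; apply/andP; split;
  [ by rewrite !inE !mkwt_eq
  | apply/forallP; let b := fresh "b" in intro b; rewrite [b]wt_eta;
    case: (b (o4 0)); case: (b (o4 1)); case: (b (o4 2)); case: (b (o4 3));
    by rewrite !inE !mkwt_eq wt_ge_mk ].
Lemma memS1_0 : wlist 0 \in S1. Proof. by rewrite /wlist /= !inE eqxx ?orTb ?orbT. Qed.
Lemma memS1_1 : wlist 1 \in S1. Proof. by rewrite /wlist /= !inE eqxx ?orTb ?orbT. Qed.
Lemma memS1_2 : wlist 2 \in S1. Proof. by rewrite /wlist /= !inE eqxx ?orTb ?orbT. Qed.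
Lemma memS1_3 : wlist 3 \in S1. Proof. by rewrite /wlist /= !inE eqxx ?orTb ?orbT. Qed.
Lemma lamS1_4 : wlist 4 \in lambda S1. Proof. by lamtac. Qed.
Lemma lamS1_5 : wlist 5 \in lambda S1. Proof. by lamtac. Qed.
Lemma lamS1_6 : wlist 6 \in lambda S1. Proof. by lamtac. Qed.
Lemma lamS1_7 : wlist 7 \in lambda S1. Proof. by lamtac. Qed.
Lemma memS2_0 : wlist 0 \in S2. Proof. by rewrite /wlist /= !inE eqxx ?orTb ?orbT. Qed.
Lemma memS2_2 : wlist 2 \in S2. Proof. by rewrite /wlist /= !inE eqxx ?orTb ?orbT. Qed.
Lemma memS2_3 : wlist 3 \in S2. Proof. by rewrite /wlist /= !inE eqxx ?orTb ?orbT. Qed.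
Lemma memS2_5 : wlist 5 \in S2. Proof. by rewrite /wlist /= !inE eqxx ?orTb ?orbT. Qed.
Lemma lamS2_1 : wlist 1 \in lambda S2. Proof. by lamtac. Qed.
Lemma lamS2_7 : wlist 7 \in lambda S2. Proof. by lamtac. Qed.
Lemma lamS2_8 : wlist 8 \in lambda S2. Proof. by lamtac. Qed.
Lemma lamS2_10 : wlist 10 \in lambda S2. Proof. by lamtac. Qed.
Lemma memS3_0 : wlist 0 \in S3. Proof. by rewrite /wlist /= !inE eqxx ?orTb ?orbT. Qed.
Lemma memS3_1 : wlist 1 \in S3. Proof. by rewrite /wlist /= !inE eqxx ?orTb ?orbT. Qed.
Lemma memS3_2 : wlist 2 \in S3. Proof. by rewrite /wlist /= !inE eqxx ?orTb ?orbT. Qed.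
Lemma memS3_5 : wlist 5 \in S3. Proof. by rewrite /wlist /= !inE eqxx ?orTb ?orbT. Qed.
Lemma lamS3_3 : wlist 3 \in lambda S3. Proof. by lamtac. Qed.
Lemma lamS3_4 : wlist 4 \in lambda S3. Proof. by lamtac. Qed.
Lemma lamS3_10 : wlist 10 \in lambda S3. Proof. by lamtac. Qed.
Lemma lamS3_11 : wlist 11 \in lambda S3. Proof. by lamtac. Qed.
Lemma memS4_0 : wlist 0 \in S4. Proof. by rewrite /wlist /= !inE eqxx ?orTb ?orbT. Qed.
Lemma memS4_1 : wlist 1 \in S4. Proof. by rewrite /wlist /= !inE eqxx ?orTb ?orbT. Qed.
Lemma memS4_3 : wlist 3 \in S4. Proof. by rewrite /wlist /= !inE eqxx ?orTb ?orbT. Qed.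
Lemma memS4_5 : wlist 5 \in S4. Proof. by rewrite /wlist /= !inE eqxx ?orTb ?orbT. Qed.
Lemma lamS4_2 : wlist 2 \in lambda S4. Proof. by lamtac. Qed.
Lemma lamS4_6 : wlist 6 \in lambda S4. Proof. by lamtac. Qed.
Lemma lamS4_8 : wlist 8 \in lambda S4. Proof. by lamtac. Qed.
Lemma lamS4_11 : wlist 11 \in lambda S4. Proof. by lamtac. Qed.

Section S.
Variable k : fieldType.

Lemma natr_nz p : prime p -> (23 <= p)%N -> p \in [pchar k] ->
  forall n, (0 < n < 23)%N -> (n%:R : k) != 0.
Proof.
move=> hp hp23 hchar n /andP [n0 n23]; rewrite -(dvdn_pcharf hchar).
apply/negP => /(dvdn_leq n0) Hle.
by move: (leq_trans hp23 Hle); rewrite leqNgt n23.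
Qed.

Lemma zero_fact (v : 'M[k]_8) a i j : entry_wt i j a -> wcomp v a = 0 -> v i j = 0.
Proof. by move=> He /matrixP/(_ i j); rewrite !mxE He. Qed.

Lemma rep_wt q : (q < 16)%N ->
  entry_wt (inord (nth 0%N RIL q) : 'I_8) (inord (nth 0%N RJL q)) (wlist q).
Proof.
case: q => [|[|[|[|[|[|[|[|[|[|[|[|[|[|[|[|q]]]]]]]]]]]]]]]] // _;
  apply/forallP => m; rewrite /wlist /= ffunE;
  case: m => [[|[|[|[|?]]]] Hm] //=; rewrite ?inordK //=.
Qed.

Lemma wcomp_Vx0 (x : nat -> k) q : (q < 16)%N -> x q = 0 -> wcomp (Vx x) (wlist q) = 0.
Proof.
move=> Hq Hx; apply/matrixP => i j; rewrite !mxE; case: ifP => // He.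
have E := entry_wt_eq He.
case: (eqVneq (nth 0 (SGL k) (8 * i + j)) 0) => [->|Hs]; first by rewrite mul0r.
have -> : nth 0%N WIL (8 * i + j) = q by rewrite -(wnum_wof Hs) -E wnum_wlist.
by rewrite Hx mulr0.
Qed.

Lemma param_zero (v : 'M[k]_8) (S : {set wt}) q : (q < 16)%N -> wlist q \in S ->
  (forall a, a \in S -> wcomp v a = 0) -> params v q = 0.
Proof. by move=> Hq Hm hz; rewrite /params /atn; apply: zero_fact (rep_wt Hq) (hz _ Hm). Qed.

Lemma param_nz (v : 'M[k]_8) q : (q < 16)%N -> in_V v -> (2 : k) != 0 ->
  wcomp v (wlist q) != 0 -> params v q != 0.
Proof.
move=> Hq hv h2; apply: contra => /eqP Hx; apply/eqP.
by rewrite {1}(V_form hv h2); apply: wcomp_Vx0.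
Qed.

Lemma finish (w : 'M[k]_8) v x' g u : W0 w -> w^T *m w = 1%:M -> w *m w^T = 1%:M ->
  in_Gk (w *m g *m w^T) -> in_kappa (F0m k) u -> v = w *m Vx x' *m w^T ->
  Vx x' *m g = g *m u -> trivial_orbit v.
Proof.
move=> HW HTw HwT HG Hu Hv Hg.
exists (F0m k); split; first by split; [exact: F0_in_V | exact: F0_rho | exact: F0_lie].
exists u, w, (w *m g *m w^T); split => //.
have Iw : invmx w = w^T.
  have [Uw _] := mulmx1_unit HwT.
  by rewrite -[RHS](mulKmx Uw) HwT mulmx1.
rewrite Iw.
have Ug := Gk_unit HG.
have E : v *m (w *m g *m w^T) = (w *m g *m w^T) *m (w *m u *m w^T).
  transitivity (w *m (Vx x' *m g) *m w^T).
    by rewrite Hv !mulmxA -[w *m Vx x' *m w^T *m w]mulmxA HTw mulmx1.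
  by rewrite Hg !mulmxA -[w *m g *m w^T *m w]mulmxA HTw mulmx1.
by rewrite -E mulmxK.
Qed.
End S.

Unset Implicit Arguments.
Theorem lemma3p5 (p : nat) (k : fieldType)
  (hp : prime p) (hp23 : (23 <= p)%N) (hchar : p \in [pchar k])
  (v : 'M[k]_8) (hv : in_V v)
  (S : {set wt}) (hS : S \in [:: S1; S2; S3; S4])
  (hzero : forall a, a \in S -> wcomp v a = 0)
  (hnz : forall a, a \in lambda S -> wcomp v a != 0)
  (hD : Delta v != 0) :
  trivial_orbit v.
Proof.
have nz := natr_nz hp hp23 hchar.
have h2 : (2 : k) != 0 by apply: nz.
have h3 : (3 : k) != 0 by apply: nz.
have h14 : (14 : k) != 0 by apply: nz.
pose x := params v.
have hvx : v = Vx x := V_form hv h2.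
have Z q : (q < 16)%N -> wlist q \in S -> x q = 0.
  by move=> Hq Hm; apply: param_zero Hq Hm hzero.
have NZ q : (q < 16)%N -> wlist q \in lambda S -> x q != 0.
  by move=> Hq Hm; apply: param_nz Hq hv h2 (hnz _ Hm).
move: hS; rewrite !inE => /or4P [] /eqP HS; subst S.
-
  have [g [u [HG Hu Hg]]] := core h2 h3 h14
    (Z 0%N erefl memS1_0) (Z 1%N erefl memS1_1) (Z 2%N erefl memS1_2) (Z 3%N erefl memS1_3)
    (NZ 4%N erefl lamS1_4) (NZ 5%N erefl lamS1_5) (NZ 6%N erefl lamS1_6) (NZ 7%N erefl lamS1_7).
  apply: (finish (w := 1%:M) (x' := x) (g := g) (u := u)) => //.
  + exact: W0_1.
  + by rewrite trmx1 mulmx1.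
  + by rewrite trmx1 mulmx1.
  + by rewrite trmx1 mulmx1 mul1mx.
  + by rewrite trmx1 mulmx1 mul1mx.
-
  pose x' := fun q => nth 0 (SN_tau k) q * x (nth 0%N PM_tau q).
  have X0 : x' 0%N = 0 by rewrite /x' /= (Z 0%N erefl memS2_0) mulr0.
  have X1 : x' 1%N = 0 by rewrite /x' /= (Z 5%N erefl memS2_5) mulr0.
  have X2 : x' 2%N = 0 by rewrite /x' /= (Z 3%N erefl memS2_3) mulr0.
  have X3 : x' 3%N = 0 by rewrite /x' /= (Z 2%N erefl memS2_2) mulr0.
  have X4 : x' 4%N != 0.
    rewrite /x' /=; apply: mulf_neq0; [by rewrite ?oppr_eq0 oner_neq0 | exact: (NZ 8%N erefl lamS2_8)].
  have X5 : x' 5%N != 0.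
    rewrite /x' /=; apply: mulf_neq0; [by rewrite ?oppr_eq0 oner_neq0 | exact: (NZ 1%N erefl lamS2_1)].
  have X6 : x' 6%N != 0.
    rewrite /x' /=; apply: mulf_neq0; [by rewrite ?oppr_eq0 oner_neq0 | exact: (NZ 10%N erefl lamS2_10)].
  have X7 : x' 7%N != 0.
    rewrite /x' /=; apply: mulf_neq0; [by rewrite ?oppr_eq0 oner_neq0 | exact: (NZ 7%N erefl lamS2_7)].
  have [g [u [HG Hu Hg]]] := core h2 h3 h14 X0 X1 X2 X3 X4 X5 X6 X7.
  apply: (finish (w := tau_mx k *m 1%:M) (x' := x') (g := g) (u := u)) => //.
  + exact: W0_t (W0_1 k).
  + by rewrite mulmx1 tau_TT.
  + by rewrite mulmx1 tau_T.
  + rewrite mulmx1; apply: (conj_G (tau_TT k) (tau_T k) (tau_Psi k) (tau_s1 k) (tau_s2 k)) => //.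
    * by move=> g0; right; rewrite tau_detP.
    * by move=> g0; left; rewrite tau_detM.
  + by rewrite mulmx1 -tau_Vx !mulmxA tau_T mul1mx -mulmxA tau_T mulmx1.
-
  pose x' := fun q => nth 0 (SN_sig k) q * x (nth 0%N PM_sig q).
  have X0 : x' 0%N = 0 by rewrite /x' /= (Z 0%N erefl memS3_0) mulr0.
  have X1 : x' 1%N = 0 by rewrite /x' /= (Z 2%N erefl memS3_2) mulr0.
  have X2 : x' 2%N = 0 by rewrite /x' /= (Z 1%N erefl memS3_1) mulr0.
  have X3 : x' 3%N = 0 by rewrite /x' /= (Z 5%N erefl memS3_5) mulr0.
  have X4 : x' 4%N != 0.
    rewrite /x' /=; apply: mulf_neq0; [by rewrite ?oppr_eq0 oner_neq0 | exact: (NZ 4%N erefl lamS3_4)].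
  have X5 : x' 5%N != 0.
    rewrite /x' /=; apply: mulf_neq0; [by rewrite ?oppr_eq0 oner_neq0 | exact: (NZ 3%N erefl lamS3_3)].
  have X6 : x' 6%N != 0.
    rewrite /x' /=; apply: mulf_neq0; [by rewrite ?oppr_eq0 oner_neq0 | exact: (NZ 10%N erefl lamS3_10)].
  have X7 : x' 7%N != 0.
    rewrite /x' /=; apply: mulf_neq0; [by rewrite ?oppr_eq0 oner_neq0 | exact: (NZ 11%N erefl lamS3_11)].
  have [g [u [HG Hu Hg]]] := core h2 h3 h14 X0 X1 X2 X3 X4 X5 X6 X7.
  apply: (finish (w := sigma_mx k *m 1%:M) (x' := x') (g := g) (u := u)) => //.
  + exact: W0_s (W0_1 k).
  + by rewrite mulmx1 sig_TT.
  + by rewrite mulmx1 sig_T.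
  + rewrite mulmx1; apply: (conj_G (sig_TT k) (sig_T k) (sig_Psi k) (sig_s1 k) (sig_s2 k)) => //.
    * by move=> g0; left; rewrite sig_detP.
    * by move=> g0; right; rewrite sig_detM.
  + by rewrite mulmx1 -sig_Vx !mulmxA sig_T mul1mx -mulmxA sig_T mulmx1.
-
  pose x1 := fun q => nth 0 (SN_sig k) q * x (nth 0%N PM_sig q).
  pose x' := fun q => nth 0 (SN_tau k) q * x1 (nth 0%N PM_tau q).
  have X0 : x' 0%N = 0 by rewrite /x' /x1 /= (Z 0%N erefl memS4_0) !mulr0.
  have X1 : x' 1%N = 0 by rewrite /x' /x1 /= (Z 3%N erefl memS4_3) !mulr0.
  have X2 : x' 2%N = 0 by rewrite /x' /x1 /= (Z 5%N erefl memS4_5) !mulr0.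
  have X3 : x' 3%N = 0 by rewrite /x' /x1 /= (Z 1%N erefl memS4_1) !mulr0.
  have X4 : x' 4%N != 0.
    rewrite /x' /x1 /=; apply: mulf_neq0; [by rewrite ?oppr_eq0 oner_neq0 | apply: mulf_neq0; [by rewrite ?oppr_eq0 oner_neq0 | exact: (NZ 8%N erefl lamS4_8)]].
  have X5 : x' 5%N != 0.
    rewrite /x' /x1 /=; apply: mulf_neq0; [by rewrite ?oppr_eq0 oner_neq0 | apply: mulf_neq0; [by rewrite ?oppr_eq0 oner_neq0 | exact: (NZ 2%N erefl lamS4_2)]].
  have X6 : x' 6%N != 0.
    rewrite /x' /x1 /=; apply: mulf_neq0; [by rewrite ?oppr_eq0 oner_neq0 | apply: mulf_neq0; [by rewrite ?oppr_eq0 oner_neq0 | exact: (NZ 6%N erefl lamS4_6)]].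
  have X7 : x' 7%N != 0.
    rewrite /x' /x1 /=; apply: mulf_neq0; [by rewrite ?oppr_eq0 oner_neq0 | apply: mulf_neq0; [by rewrite ?oppr_eq0 oner_neq0 | exact: (NZ 11%N erefl lamS4_11)]].
  have [g [u [HG Hu Hg]]] := core h2 h3 h14 X0 X1 X2 X3 X4 X5 X6 X7.
  pose st := sigma_mx k *m tau_mx k.
  have stTT : st^T *m st = 1%:M.
    by rewrite /st trmx_mul !mulmxA -(mulmxA _ (sigma_mx k)^T) sig_TT mulmx1 tau_TT.
  have stT : st *m st^T = 1%:M.
    by rewrite /st trmx_mul !mulmxA -(mulmxA _ (tau_mx k)) tau_T mulmx1 sig_T.
  apply: (finish (w := sigma_mx k *m (tau_mx k *m 1%:M)) (x' := x') (g := g) (u := u)) => //.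
  + exact: W0_s (W0_t (W0_1 k)).
  + by rewrite mulmx1 -/st.
  + by rewrite mulmx1 -/st.
  + have Hin : in_Gk (tau_mx k *m g *m (tau_mx k)^T).
      apply: (conj_G (tau_TT k) (tau_T k) (tau_Psi k) (tau_s1 k) (tau_s2 k)) => //.
      * by move=> g0; right; rewrite tau_detP.
      * by move=> g0; left; rewrite tau_detM.
    have Hout : in_Gk (sigma_mx k *m (tau_mx k *m g *m (tau_mx k)^T) *m (sigma_mx k)^T).
      apply: (conj_G (sig_TT k) (sig_T k) (sig_Psi k) (sig_s1 k) (sig_s2 k)) => //.
      * by move=> g0; left; rewrite sig_detP.
      * by move=> g0; right; rewrite sig_detM.
    by rewrite mulmx1 trmx_mul !mulmxA; move: Hout; rewrite !mulmxA.
  + have E1 : Vx x' = (tau_mx k)^T *m Vx x1 *m tau_mx k := esym (tau_Vx x1).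
    have E2 : Vx x1 = (sigma_mx k)^T *m Vx x *m sigma_mx k := esym (sig_Vx x).
    rewrite mulmx1 E1 E2 {1}hvx.
    transitivity (sigma_mx k *m ((tau_mx k *m (tau_mx k)^T) *m ((sigma_mx k)^T *m Vx x *m sigma_mx k)
                  *m (tau_mx k *m (tau_mx k)^T)) *m (sigma_mx k)^T).
      by rewrite tau_T mul1mx mulmx1 !mulmxA sig_T mul1mx -mulmxA sig_T mulmx1.
    by rewrite trmx_mul !mulmxA.
Qed.
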